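(* Let ${\bf X},{\bf Y}$ be $r\times r$ complex matrices. If $\det({\bf S}{\bf X}+{\bf Y})=0$ for every $r\times r$ diagonal matrix ${\bf S}$ with diagonal entries in $\{1,-1\}$, then $\det({\bf Y})=0$. *)

(* Defs.v *)
From mathcomp Require Import all_boot all_algebra.
From mathcomp Require Import reals complex.
(* Complex numbers are modelled as R[i] = complex R for R : realType
   (i.e. the real numbers), via mathcomp-real-closed's complex.v. *)

(* Main.v *)
Require Import Defs.
From mathcomp Require Import all_boot all_algebra.
From mathcomp Require Import reals complex.
From mathcomp Require Import ring.
Local Open Scope ring_scope.
Import GRing.Theory Num.Theory.

Definition Mof {R : realType} {r : nat} (X Y : 'M[R[i]]_r) (s : 'I_r -> R[i]) : 'M[R[i]]_r :=
  \matrix_(i, j) (s i * X i j + Y i j).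

Lemma Mof_diag (R : realType) r (X Y : 'M[R[i]]_r) s :
  Mof X Y s = diag_mx (\row_k s k) *m X + Y.
Proof. by apply/matrixP => i j; rewrite mul_diag_mx !mxE. Qed.

Lemma two_half (R : realType) : (2^-1 + 2^-1 : R[i]) = 1.
Proof.
have h2 : (2 : R[i]) != 0 by rewrite pnatr_eq0.
by field.
Qed.

Theorem lemma4p15 (R : realType) (r : nat) (X Y : 'M[R[i]]_r) :
  (forall S : 'M[R[i]]_r,
      is_diag_mx S -> (forall k : 'I_r, S k k = 1 \/ S k k = -1) ->
      \det (S *m X + Y) = 0) ->
  \det Y = 0.
Proof.
move=> H.
have Q : forall n, (n <= r)%N -> forall s : 'I_r -> R[i],
    (forall k : 'I_r, (k < n)%N -> s k = 0) ->
    (forall k : 'I_r, (n <= k)%N -> s k = 1 \/ s k = -1) ->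
    \det (Mof X Y s) = 0.
  elim=> [|n IH] Hn s H0 H1.
    rewrite Mof_diag; apply: H; first exact: diag_mx_is_diag.
    by move=> k; rewrite !mxE eqxx mulr1n; apply: H1.
  have Hnr : (n < r)%N by [].
  pose i0 : 'I_r := Ordinal Hnr.
  pose s1 := fun k : 'I_r => if k == i0 then 1 else s k.
  pose s2 := fun k : 'I_r => if k == i0 then -1 else s k.
  have E1 : \det (Mof X Y s1) = 0.
    apply: (IH (ltnW Hn)) => k Hk.
      rewrite /s1 /s2 /=; have -> : (k == i0) = false by apply/negbTE; rewrite -val_eqE /= neq_ltn Hk.
      by apply: H0; apply: ltnW.
    rewrite /s1; case: eqP => [_|/eqP ne]; first by left.
    apply: H1; rewrite ltn_neqAle Hk andbT eq_sym.
    by move: ne; rewrite -val_eqE.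
  have E2 : \det (Mof X Y s2) = 0.
    apply: (IH (ltnW Hn)) => k Hk.
      rewrite /s1 /s2 /=; have -> : (k == i0) = false by apply/negbTE; rewrite -val_eqE /= neq_ltn Hk.
      by apply: H0; apply: ltnW.
    rewrite /s2; case: eqP => [_|/eqP ne]; first by right.
    apply: H1; rewrite ltn_neqAle Hk andbT eq_sym.
    by move: ne; rewrite -val_eqE.
  rewrite (@determinant_multilinear _ _ _ (Mof X Y s1) (Mof X Y s2) i0 (2^-1) (2^-1)).
  - by rewrite E1 E2 !mulr0 addr0.
  - apply/rowP => j; rewrite !mxE /s1 /s2 eqxx.
    rewrite H0 /=; last by rewrite ltnSn.
    rewrite mul0r add0r mul1r mulN1r !mulrDr addrACA -mulrDr subrr mulr0 add0r -mulrDl two_half.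
    by rewrite mul1r.
  - apply/matrixP => i j; rewrite !mxE /s1.
    by have -> : (lift i0 i == i0) = false by apply/negbTE; rewrite eq_sym neq_lift.
  - apply/matrixP => i j; rewrite !mxE /s2.
    by have -> : (lift i0 i == i0) = false by apply/negbTE; rewrite eq_sym neq_lift.
have -> : Y = Mof X Y (fun _ => 0).
  by apply/matrixP => i j; rewrite !mxE mul0r add0r.
apply: (Q r (leqnn r)) => k; first by [].
by rewrite leqNgt ltn_ord.
Qed.
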